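(* Let $\mathcal F$ be a proper filter on $\omega$. The game $\mathfrak G(\mathcal F,[\omega]^{<\omega},\mathcal F^c)$ is equivalent to $\mathfrak G(\mathcal F,\omega,\mathcal F^c)$ (a player has a winning strategy in one iff the same player has one in the other). Consequently, in $\mathfrak G(\mathcal F,[\omega]^{<\omega},\mathcal F^c)$, player I never has a winning strategy, and player II has a winning strategy if and only if $\mathcal F$ is not a Ramsey ultrafilter.
   Context: A filter on $\omega$ is a family $\mathcal F\subseteq\mathcal P(\omega)$ closed under finite intersections and supersets and containing all cofinite sets; it is proper if all its members are infinite. $\mathcal F^c=\mathcal P(\omega)\setminus\mathcal F$. Game $\mathfrak G(\mathcal X,\omega,\mathcal Z)$: at each stage $k$, I chooses $X_k\in\mathcal X$ and II responds with $n_k\in X_k$; II wins if $\{n_k:k\in\omega\}\in\mathcal Z$. Game $\mathfrak G(\mathcal X,[\omega]^{<\omega},\mathcal Z)$: at each stage $k$, I chooses $X_k\in\mathcal X$ and II responds with a nonempty finite $s_k\subseteq X_k$; II wins if $\bigcup_k s_k\in\mathcal Z$. In each game I wins when II does not. A tree is a set $T$ of finite sequences of natural numbers containing the empty sequence and closed under initial segments; it is an $\mathcal F$-tree if for each $\bar s\in T$ there is $X_{\bar s}\in\mathcal F$ with $\bar s^\frown n\in T$ for all $n\in X_{\bar s}$; a branch (infinite sequence with all initial segments in $T$) is in $\mathcal F$ if its set of values is in $\mathcal F$. $\mathcal F$ is Ramsey if every $\mathcal F$-tree has a branch in $\mathcal F$; a Ramsey ultrafilter is an ultrafilter that is Ramsey.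 *)

(* Defs.v *)
From Stdlib Require Import List Arith.
Import ListNotations.

Definition nset := nat -> Prop.

Definition finite_set (A : nset) : Prop := exists N, forall n, A n -> n < N.
Definition cofinite (A : nset) : Prop := finite_set (fun n => ~ A n).

(* Filter on omega (as in the paper: contains all cofinite sets). *)
Definition is_filter (F : nset -> Prop) : Prop :=
  (forall A B, F A -> F B -> F (fun n => A n /\ B n)) /\
  (forall A B, F A -> (forall n, A n -> B n) -> F B) /\
  (forall A, cofinite A -> F A).

Definition proper_filter (F : nset -> Prop) : Prop :=
  is_filter F /\ forall A, F A -> ~ finite_set A.

Definition ultrafilter (F : nset -> Prop) : Prop :=
  proper_filter F /\ forall A, F A \/ F (fun n => ~ A n).

Definition is_tree (T : list nat -> Prop) : Prop :=
  T [] /\ forall s t, T (s ++ t) -> T s.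

Definition F_tree (F : nset -> Prop) (T : list nat -> Prop) : Prop :=
  is_tree T /\ forall s, T s -> exists X, F X /\ forall n, X n -> T (s ++ [n]).

Definition prefix {A : Type} (b : nat -> A) (k : nat) : list A := map b (seq 0 k).

Definition range (b : nat -> nat) : nset := fun m => exists k, b k = m.

Definition is_branch (T : list nat -> Prop) (b : nat -> nat) : Prop :=
  forall k, T (prefix b k).

Definition Ramsey (F : nset -> Prop) : Prop :=
  forall T, F_tree F T -> exists b, is_branch T b /\ F (range b).

Definition Ramsey_ultrafilter (F : nset -> Prop) : Prop :=
  ultrafilter F /\ Ramsey F.

(* Strategy of I: from II's previous moves to a move in X. *)
Definition I_wins_omega (Xc Z : nset -> Prop) : Prop :=
  exists sigma : list nat -> nset,
    (forall h, Xc (sigma h)) /\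
    forall n : nat -> nat,
      (forall k, sigma (prefix n k) (n k)) -> ~ Z (range n).

(* Strategy of II: from I's moves X_0..X_k to a response n_k in X_k. *)
Definition II_wins_omega (Xc Z : nset -> Prop) : Prop :=
  exists tau : list nset -> nat,
    (forall h X, Xc X -> X (tau (h ++ [X]))) /\
    forall X : nat -> nset,
      (forall k, Xc (X k)) -> Z (range (fun k => tau (prefix X (S k)))).

Definition legal_fin_move (X s : nset) : Prop :=
  finite_set s /\ (exists m, s m) /\ (forall m, s m -> X m).

Definition union_moves (s : nat -> nset) : nset := fun m => exists k, s k m.

Definition I_wins_fin (Xc Z : nset -> Prop) : Prop :=
  exists sigma : list nset -> nset,
    (forall h, Xc (sigma h)) /\
    forall s : nat -> nset,
      (forall k, legal_fin_move (sigma (prefix s k)) (s k)) -> ~ Z (union_moves s).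

Definition II_wins_fin (Xc Z : nset -> Prop) : Prop :=
  exists tau : list nset -> nset,
    (forall h X, Xc X -> legal_fin_move X (tau (h ++ [X]))) /\
    forall X : nat -> nset,
      (forall k, Xc (X k)) -> Z (union_moves (fun k => tau (prefix X (S k)))).

Definition co (F : nset -> Prop) : nset -> Prop := fun A => ~ F A.

(* Main.v *)
Require Import Defs.
From Stdlib Require Import List Arith Lia Classical ClassicalEpsilon.
Import ListNotations.

Lemma prefix_S {A} (b : nat -> A) k : prefix b (S k) = prefix b k ++ [b k].
Proof. unfold prefix. rewrite seq_S, map_app. reflexivity. Qed.

Lemma prefix_length {A} (b : nat -> A) k : length (prefix b k) = k.
Proof. unfold prefix. rewrite length_map, length_seq. reflexivity. Qed.

Lemma firstn_app_l {A} (s t : list A) j : j <= length s -> firstn j (s ++ t) = firstn j s.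
Proof.
  revert j; induction s as [|a s IH]; intros j Hj; simpl in *.
  - assert (j = 0) by lia; subst; reflexivity.
  - destruct j; simpl; [reflexivity|]. rewrite IH by lia. reflexivity.
Qed.

Lemma firstn_length_app {A} (s t : list A) : firstn (length s) (s ++ t) = s.
Proof. induction s; simpl; [reflexivity| now rewrite IHs]. Qed.

Lemma nonfin_nonempty (X : nset) : ~ finite_set X -> exists n, X n.
Proof.
  intro H. apply NNPP; intro C. apply H. exists 0. intros n Xn. exfalso; eauto.
Qed.

Definition pk (X : nset) (N : nat) : nat := epsilon (inhabits 0) (fun x => X x /\ N <= x).

Lemma pk_spec X N : ~ finite_set X -> X (pk X N) /\ N <= pk X N.
Proof.
  intro H. unfold pk. apply epsilon_spec. apply NNPP; intro C. apply H. exists N.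
  intros n Xn. destruct (le_lt_dec N n); [exfalso; apply C; eauto | auto].
Qed.

Fixpoint st {A} (emb : nat -> A) (sigma : list A -> nset) (k : nat)
  : list nat * list nat * nat :=
  match k with
  | 0 => ([], [], 0)
  | S k => let p := st emb sigma k in
    let x := pk (sigma (map emb (fst (fst p)))) (snd p) in
    let y := pk (sigma (map emb (snd (fst p)))) (S x) in
    ((fst (fst p) ++ [x], snd (fst p) ++ [y]), S y)
  end.

Definition xs {A} emb (sigma : list A -> nset) k :=
  pk (sigma (map emb (fst (fst (st emb sigma k))))) (snd (st emb sigma k)).
Definition ys {A} emb (sigma : list A -> nset) k :=
  pk (sigma (map emb (snd (fst (st emb sigma k))))) (S (xs emb sigma k)).

Lemma two_plays {A} (emb : nat -> A) (sigma : list A -> nset) :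
  (forall h, ~ finite_set (sigma h)) ->
  exists n m : nat -> nat,
    (forall k, sigma (map emb (prefix n k)) (n k)) /\
    (forall k, sigma (map emb (prefix m k)) (m k)) /\
    (forall i j, n i <> m j).
Proof.
  intro Hinf.
  assert (Hst : forall k, st emb sigma (S k) =
     ((fst (fst (st emb sigma k)) ++ [xs emb sigma k],
       snd (fst (st emb sigma k)) ++ [ys emb sigma k]), S (ys emb sigma k)))
    by (intro; reflexivity).
  assert (Px : forall k, prefix (xs emb sigma) k = fst (fst (st emb sigma k))).
  { induction k; [reflexivity|]. rewrite prefix_S, IHk, Hst. reflexivity. }
  assert (Py : forall k, prefix (ys emb sigma) k = snd (fst (st emb sigma k))).
  { induction k; [reflexivity|]. rewrite prefix_S, IHk, Hst. reflexivity. }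
  set (N := fun k => snd (st emb sigma k)).
  assert (Hx : forall k, N k <= xs emb sigma k) by (intro; apply (proj2 (pk_spec _ _ (Hinf _)))).
  assert (Hy : forall k, S (xs emb sigma k) <= ys emb sigma k) by (intro; apply (proj2 (pk_spec _ _ (Hinf _)))).
  assert (HN : forall k, N (S k) = S (ys emb sigma k)) by (intro; unfold N; rewrite Hst; reflexivity).
  assert (Hmono : forall i j, i <= j -> N i <= N j).
  { intros i j Hij. induction Hij; [lia|]. rewrite HN. specialize (Hx m). specialize (Hy m). lia. }
  exists (xs emb sigma), (ys emb sigma). split; [|split].
  - intro k. rewrite Px. unfold xs. apply (proj1 (pk_spec _ _ (Hinf _))).
  - intro k. rewrite Py. unfold ys. apply (proj1 (pk_spec _ _ (Hinf _))).
  - intros i j E. destruct (lt_eq_lt_dec i j) as [[l|e]|l].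
    + pose proof (Hmono (S i) j l). rewrite HN in H. pose proof (Hx j). pose proof (Hy j).
      pose proof (Hy i). lia.
    + subst. pose proof (Hy j). lia.
    + pose proof (Hmono (S j) i l). rewrite HN in H. pose proof (Hx i). lia.
Qed.

Lemma disjoint_not_both (F : nset -> Prop) (HF : proper_filter F) (n m : nat -> nat) :
  (forall i j, n i <> m j) -> F (range n) -> F (range m) -> False.
Proof.
  intros D Hn Hm. destruct HF as [[Hi [Hu Hc]] Hp].
  apply (Hp _ (Hi _ _ Hn Hm)). exists 0. intros x [[i Ei] [j Ej]]. exfalso. apply (D i j). congruence.
Qed.

Lemma noI_omega F (HF : proper_filter F) : ~ I_wins_omega F (co F).
Proof.
  intros [sigma [Hs Hw]].
  destruct (two_plays (fun x => x) sigma) as [n [m [Hn [Hm D]]]].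
  { intro h. apply (proj2 HF), Hs. }
  apply (disjoint_not_both F HF n m D).
  - apply NNPP. apply Hw. intro k. rewrite <- (map_id (prefix n k)). apply Hn.
  - apply NNPP. apply Hw. intro k. rewrite <- (map_id (prefix m k)). apply Hm.
Qed.

Definition sing (n : nat) : nset := fun x => x = n.

Lemma sing_legal (X : nset) n : X n -> legal_fin_move X (sing n).
Proof.
  intro H. split; [|split].
  - exists (S n). unfold sing. intros; lia.
  - exists n. reflexivity.
  - unfold sing. intros; subst; auto.
Qed.

Lemma noI_fin F (HF : proper_filter F) : ~ I_wins_fin F (co F).
Proof.
  intros [sigma [Hs Hw]].
  destruct (two_plays sing sigma) as [n [m [Hn [Hm D]]]].
  { intro h. apply (proj2 HF), Hs. }
  assert (Hpre : forall (b : nat -> nat) k, prefix (fun k => sing (b k)) k = map sing (prefix b k)).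
  { intros. unfold prefix. rewrite map_map. reflexivity. }
  destruct HF as [[Hi [Hu Hc]] Hp] eqn:E.
  apply (disjoint_not_both F HF n m D).
  - apply (Hu (union_moves (fun k => sing (n k)))).
    + apply NNPP. apply Hw. intro k. rewrite Hpre. apply sing_legal, Hn.
    + intros x [k Hk]. exists k. unfold sing in Hk. auto.
  - apply (Hu (union_moves (fun k => sing (m k)))).
    + apply NNPP. apply Hw. intro k. rewrite Hpre. apply sing_legal, Hm.
    + intros x [k Hk]. exists k. unfold sing in Hk. auto.
Qed.

Lemma om_fin F (HF : proper_filter F) : II_wins_omega F (co F) -> II_wins_fin F (co F).
Proof.
  intros [tau [Hl Hw]]. exists (fun l => sing (tau l)). split.
  - intros h X HX. apply sing_legal, Hl, HX.
  - intros X HX HU. apply (Hw X HX). destruct HF as [[Hi [Hu Hc]] Hp].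
    apply (Hu _ _ HU). intros x [k Hk]. exists k. unfold sing in Hk. auto.
Qed.

Lemma fin_RU F (HF : proper_filter F) : II_wins_fin F (co F) -> ~ Ramsey_ultrafilter F.
Proof.
  intros [tau [Hl Hw]] [[_ Hult] Hram].
  destruct HF as [[Hi [Hu Hc]] Hp].
  set (Y := fun h : list nset => fun n => exists X, F X /\ tau (h ++ [X]) n).
  set (ch := fun h n => epsilon (inhabits (fun _ : nat => True))
                         (fun X => F X /\ tau (h ++ [X]) n)).
  set (H := fun s : list nat => fold_left (fun h n => h ++ [ch h n]) s []).
  set (T := fun s : list nat => forall j, j < length s -> Y (H (firstn j s)) (nth j s 0)).
  assert (HY : forall h, F (Y h)).
  { intro h. destruct (Hult (Y h)) as [|HZ]; [assumption|].
    destruct (Hl h _ HZ) as [_ [[m Hm] Hs]]. exfalso. apply (Hs m Hm).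
    exists (fun n => ~ Y h n). auto. }
  assert (HH : forall s n, H (s ++ [n]) = H s ++ [ch (H s) n]).
  { intros. unfold H. rewrite fold_left_app. reflexivity. }
  assert (FT : F_tree F T).
  { split; [split|].
    - intros j Hj. simpl in Hj. lia.
    - intros s t Hst j Hj. specialize (Hst j).
      rewrite length_app, firstn_app_l, app_nth1 in Hst by lia. apply Hst. lia.
    - intros s Hs. exists (Y (H s)). split; [apply HY|]. intros n Yn j Hj.
      rewrite length_app in Hj. simpl in Hj.
      destruct (Nat.eq_dec j (length s)) as [->|Hne].
      + rewrite firstn_length_app, nth_middle. exact Yn.
      + rewrite firstn_app_l, app_nth1 by lia. apply Hs. lia. }
  destruct (Hram T FT) as [b [Hb Fb]].
  assert (Hbj : forall j, Y (H (prefix b j)) (b j)).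
  { intro j. specialize (Hb (S j) j). rewrite prefix_length in Hb.
    rewrite prefix_S in Hb.
    assert (E1: firstn j (prefix b j ++ [b j]) = prefix b j).
    { rewrite firstn_app_l by (rewrite prefix_length; lia). apply firstn_all2.
      rewrite prefix_length; lia. }
    assert (E2: nth j (prefix b j ++ [b j]) 0 = b j).
    { rewrite app_nth2 by (rewrite prefix_length; lia). rewrite prefix_length, Nat.sub_diag. reflexivity. }
    rewrite E1, E2 in Hb. apply Hb. lia. }
  set (Xs := fun j => ch (H (prefix b j)) (b j)).
  assert (HXs : forall j, F (Xs j) /\ tau (H (prefix b j) ++ [Xs j]) (b j)).
  { intro j. unfold Xs, ch. apply epsilon_spec. apply Hbj. }
  assert (PX : forall k, prefix Xs k = H (prefix b k)).
  { induction k; [reflexivity|]. rewrite !prefix_S, HH, IHk. reflexivity. }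
  apply (Hw Xs (fun k => proj1 (HXs k))).
  apply (Hu _ _ Fb). intros x [k <-]. exists k. rewrite prefix_S, PX. apply HXs.
Qed.

Lemma RU_om F (HF : proper_filter F) : ~ Ramsey_ultrafilter F -> II_wins_omega F (co F).
Proof.
  intro NRU. pose proof HF as HF'. destruct HF' as [[Hi [Hu Hc]] Hp].
  destruct (classic (forall A, F A \/ F (fun n => ~ A n))) as [Hult|Hnu].
  - assert (NR : ~ Ramsey F) by (intro R; apply NRU; split; [split|]; auto).
    apply not_all_ex_not in NR. destruct NR as [T NT].
    apply imply_to_and in NT. destruct NT as [FT NB].
    set (c := fun s X => epsilon (inhabits 0) (fun n => X n /\ (T s -> T (s ++ [n])))).
    assert (Hc' : forall s X, F X -> X (c s X) /\ (T s -> T (s ++ [c s X]))).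
    { intros s X HX. unfold c. apply epsilon_spec.
      destruct (classic (T s)) as [Ts|nTs].
      - destruct (proj2 FT s Ts) as [Z [FZ HZ]].
        destruct (nonfin_nonempty _ (Hp _ (Hi _ _ HX FZ))) as [n [Xn Zn]].
        exists n. auto.
      - destruct (nonfin_nonempty _ (Hp _ HX)) as [n Xn]. exists n. split; tauto. }
    set (g := fun h : list nset => fold_left (fun acc X => acc ++ [c acc X]) h []).
    assert (Hg : forall h X, g (h ++ [X]) = g h ++ [c (g h) X]).
    { intros. unfold g. rewrite fold_left_app. reflexivity. }
    exists (fun l => last (g l) 0). split.
    + intros h X HX. rewrite Hg, last_last. apply Hc', HX.
    + intros X HX Frange. apply NB.
      set (b := fun k => last (g (prefix X (S k))) 0).
      assert (Hb : forall k, b k = c (g (prefix X k)) (X k)).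
      { intro k. unfold b. rewrite prefix_S, Hg, last_last. reflexivity. }
      assert (Pb : forall k, prefix b k = g (prefix X k)).
      { induction k; [reflexivity|]. rewrite !prefix_S, Hg, IHk, Hb. reflexivity. }
      exists b. split; [|exact Frange].
      intro k. rewrite Pb. induction k.
      * apply (proj1 (proj1 FT)).
      * rewrite prefix_S, Hg. apply Hc'; auto.
  - apply not_all_ex_not in Hnu. destruct Hnu as [A HA]. apply not_or_and in HA.
    destruct HA as [nA nAc].
    set (pA := fun X : nset => epsilon (inhabits 0) (fun n => X n /\ A n)).
    assert (HpA : forall X, F X -> X (pA X) /\ A (pA X)).
    { intros X HX. unfold pA. apply epsilon_spec. apply NNPP; intro C. apply nAc.
      apply (Hu _ _ HX). intros n Xn An. apply C. eauto. }
    exists (fun l => pA (last l (fun _ => True))). split.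
    + intros h X HX. rewrite last_last. apply HpA, HX.
    + intros X HX Fr. apply nA. apply (Hu _ _ Fr). intros x [k <-].
      rewrite prefix_S, last_last. apply HpA, HX.
Qed.

Theorem theorem2p17 (F : nset -> Prop) (HF : proper_filter F) :
  (I_wins_fin F (co F) <-> I_wins_omega F (co F)) /\
  (II_wins_fin F (co F) <-> II_wins_omega F (co F)) /\
  ~ I_wins_fin F (co F) /\
  (II_wins_fin F (co F) <-> ~ Ramsey_ultrafilter F).
Proof.
  pose proof (noI_fin F HF). pose proof (noI_omega F HF).
  pose proof (om_fin F HF). pose proof (fin_RU F HF). pose proof (RU_om F HF).
  split; [tauto|]. split; [tauto|]. split; [tauto|]. tauto.
Qed.
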